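(* Let $n\ge3$ and let $\sigma$ be a Riemannian metric on the complement of a ball in $\mathbb{R}^n$ which is asymptotically flat. There exists $r_1>0$, depending only on $\sigma$, such that for every $r_0\ge r_1$ there exists a rotationally symmetric function $b\colon\mathbb{R}^n\setminus B_{r_0}(0)\to\mathbb{R}$ with (i) $b(x)\simeq r_0^{\,n-\frac32}\,|x|^{-(n-\frac52)}$, and (ii) $g^{ij}(\sigma,\nabla b)\,{}^\sigma\nabla^2_{ij}b\le 0$, i.e. $b$ is a static supersolution.
   Context: Asymptotic flatness of $\sigma$ means: there is a bounded function $\omega$ with $\omega(r)\to0$ as $r\to\infty$ such that $|\sigma_{ij}-\delta_{ij}|\lesssim\omega(r)$ and $|\partial\sigma_{ij}|\lesssim\omega(r)/r$ for $r=|x|$ large (Euclidean norms and partial derivatives). For a function $w$ with $|\nabla w|_\sigma<1$, $g^{ij}(\sigma,\nabla w)=\sigma^{ij}+\frac{\sigma^{ik}\sigma^{jl}w_kw_l}{1-\sigma^{kl}w_kw_l}$ and ${}^\sigma\nabla^2_{ij}w=w_{ij}-\Gamma^k_{ij}w_k$ with $\Gamma$ the Christoffel symbols of $\sigma$. The notation $x\lesssim y$ means $x\le Cy$ for a constant $C=C(n)>0$, and $x\simeq y$ means $x\lesssim y$ and $y\lesssim x$. *)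

(* Defs.v *)
From HB Require Import structures.
From mathcomp Require Import all_boot all_order all_algebra.
From mathcomp Require Import all_classical all_reals all_analysis.
Set Implicit Arguments. Unset Strict Implicit. Unset Printing Implicit Defensive.
Import Order.TTheory GRing.Theory Num.Theory.
Import numFieldNormedType.Exports.
Local Open Scope ring_scope.

Section Defs.
Variables (R : realType) (n : nat).

Definition enorm (x : 'rV[R]_n) : R := Num.sqrt (\sum_(i < n) (x 0 i) ^+ 2).

Definition ebasis (i : 'I_n) : 'rV[R]_n := delta_mx 0 i.

Definition partial (f : 'rV[R]_n -> R) (i : 'I_n) : 'rV[R]_n -> R :=
  fun x => derive f x (ebasis i).

Definition iter_partial (f : 'rV[R]_n -> R) (l : seq 'I_n) : 'rV[R]_n -> R :=
  foldr (fun i g => partial g i) f l.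

Definition riem_metric_ext (R0 : R) (sigma : 'rV[R]_n -> 'M[R]_n) : Prop :=
  forall x, R0 < enorm x ->
    (sigma x)^T = sigma x /\
    (forall v : 'rV[R]_n, v != 0 -> 0 < (v *m sigma x *m v^T) 0 0) /\
    (forall (i j : 'I_n) (l : seq 'I_n),
        differentiable (iter_partial (fun y => sigma y i j) l) x).

Definition asymp_flat (sigma : 'rV[R]_n -> 'M[R]_n) : Prop :=
  exists omega : R -> R,
    (exists M : R, forall r, `|omega r| <= M) /\
    (omega @ +oo%R --> (0 : R))%classic /\
    exists (C R1 : R), 0 < C /\
      forall x, R1 <= enorm x ->
        forall i j : 'I_n,
          `|sigma x i j - (i == j)%:R| <= C * omega (enorm x) /\
          forall k : 'I_n,
            `|partial (fun y => sigma y i j) k x| <= C * (omega (enorm x) / enorm x).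

Definition sinv (sigma : 'rV[R]_n -> 'M[R]_n) (x : 'rV[R]_n) : 'M[R]_n :=
  invmx (sigma x).

Definition christoffel (sigma : 'rV[R]_n -> 'M[R]_n) (x : 'rV[R]_n)
  (k i j : 'I_n) : R :=
  2^-1 * \sum_(l < n) sinv sigma x k l *
    (partial (fun y => sigma y j l) i x + partial (fun y => sigma y i l) j x
     - partial (fun y => sigma y i j) l x).

Definition grad_sq (sigma : 'rV[R]_n -> 'M[R]_n) (w : 'rV[R]_n -> R)
  (x : 'rV[R]_n) : R :=
  \sum_(k < n) \sum_(l < n) sinv sigma x k l * partial w k x * partial w l x.

Definition gmat (sigma : 'rV[R]_n -> 'M[R]_n) (w : 'rV[R]_n -> R)
  (x : 'rV[R]_n) (i j : 'I_n) : R :=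
  sinv sigma x i j +
  (\sum_(k < n) \sum_(l < n) sinv sigma x i k * sinv sigma x j l
                              * partial w k x * partial w l x)
  / (1 - grad_sq sigma w x).

Definition cov_hess (sigma : 'rV[R]_n -> 'M[R]_n) (w : 'rV[R]_n -> R)
  (x : 'rV[R]_n) (i j : 'I_n) : R :=
  partial (partial w i) j x - \sum_(k < n) christoffel sigma x k i j * partial w k x.

Definition static_op (sigma : 'rV[R]_n -> 'M[R]_n) (w : 'rV[R]_n -> R)
  (x : 'rV[R]_n) : R :=
  \sum_(i < n) \sum_(j < n) gmat sigma w x i j * cov_hess sigma w x i j.

Definition twice_diff (w : 'rV[R]_n -> R) (x : 'rV[R]_n) : Prop :=
  differentiable w x /\ forall i : 'I_n, differentiable (partial w i) x.

Definition rot_sym_ext (r0 : R) (w : 'rV[R]_n -> R) : Prop :=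
  forall x y : 'rV[R]_n, r0 <= enorm x -> enorm x = enorm y -> w x = w y.

End Defs.

(* Main.v *)
Require Import Defs.
From HB Require Import structures.
From mathcomp Require Import all_boot all_order all_algebra.
From mathcomp Require Import all_classical all_reals all_analysis.
From mathcomp Require Import ring lra.
Import Order.TTheory GRing.Theory Num.Theory.
Import numFieldNormedType.Exports.

Local Open Scope ring_scope.

Section Aux.
Variables (R : realType) (n : nat).

Definition crd (i : 'I_n) (y : 'rV[R]_n) : R := y 0 i.

Lemma is_derive_crd i (y v : 'rV[R]_n) : is_derive y v (crd i) (v 0 i).
Proof.
have @f : {linear 'rV[R]_n -> R}.
  by exists (fun N : 'M[R]_(_, _) => N 0 i); do 2![eexists]; do ?[constructor];
     rewrite ?mxE// => ? *; rewrite ?mxE//; move=> ?; rewrite !mxE.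
have -> : crd i = f by [].
have fc : continuous f by exact: coord_continuous.
apply: DeriveDef; first exact/diff_derivable/linear_differentiable.
by rewrite deriveE ?diff_lin//; exact: linear_differentiable.
Qed.

Lemma differentiable_crd i (y : 'rV[R]_n) : differentiable (crd i) y.
Proof. exact: differentiable_coord. Qed.

Definition Qf (y : 'rV[R]_n) : R := \sum_(i < n) crd i y ^+ 2.

Lemma Qf_fun : Qf = \sum_(i < n) (crd i ^+ 2).
Proof. by apply/funext => y; rewrite /Qf fct_sumE. Qed.

Lemma differentiable_Qf y : differentiable Qf y.
Proof.
rewrite Qf_fun; apply: differentiable_sum => i.
exact: differentiableX (differentiable_crd i y).
Qed.

Lemma is_derive_Qf y v : is_derive y v Qf (\sum_(i < n) 2 * y 0 i * v 0 i).
Proof.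
rewrite Qf_fun.
have H : forall i, is_derive y v (crd i ^+ 2) (2 * y 0 i * v 0 i).
  move=> i; have := is_deriveX 2 (is_derive_crd i y v).
  by rewrite /crd /= expr1.
exact: (@is_derive_sum _ _ _ _ (fun i => crd i ^+ 2)).
Qed.

Lemma derive_comp1 (f : 'rV[R]_n -> R) (g : R -> R) y v :
  differentiable f y -> differentiable g (f y) ->
  'D_v (g \o f) y = 'D_v f y * derive1 g (f y).
Proof.
move=> df dg.
rewrite deriveE; last exact: differentiable_comp.
rewrite diff_comp // deriveE // derive1E' //=.
rewrite -[X in 'd g _ X = _]mulr1.
by rewrite -[_ * 1]/(_ *: (1:R)) linearZ.
Qed.


Lemma is_derive_Apow (A p q : R) : 0 < q ->
  is_derive q 1 (fun x : R => A * x `^ p) (A * (p * q `^ (p - 1))).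
Proof. move=> q0; exact: (@is_deriveZ _ _ _ _ A q 1 _ (is_derive1_powR p q0)). Qed.

Lemma derive1_Apow (A p q : R) : 0 < q ->
  derive1 (fun x : R => A * x `^ p) q = A * (p * q `^ (p - 1)).
Proof. by move=> q0; rewrite derive1E; have [_ ->] := is_derive_Apow A p q q0. Qed.

Lemma differentiable_Apow (A p q : R) : 0 < q ->
  differentiable (fun x : R => A * x `^ p) q.
Proof. by move=> q0; apply/derivable1_diffP; have [] := is_derive_Apow A p q q0. Qed.

Definition Qs (s : R) (y : 'rV[R]_n) := Qf y + s.

Lemma differentiable_Qs s y : differentiable (Qs s) y.
Proof.
have -> : Qs s = Qf + cst s by apply/funext => z.
apply: differentiableD; [exact: differentiable_Qf|exact: differentiable_cst].
Qed.

Lemma derive_Qs s y j : 'D_(@ebasis R n j) (Qs s) y = 2 * y 0 j.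
Proof.
have -> : Qs s = Qf + cst s by apply/funext => z.
have := is_deriveD (is_derive_Qf y (@ebasis R n j)) (is_derive_cst s y (@ebasis R n j)).
move=> [_ ->]; rewrite addr0 (bigD1 j) //= big1 => [|k kj].
  by rewrite /ebasis !mxE !eqxx /= mulr1 addr0.
by rewrite /ebasis !mxE eqxx /= (negbTE kj) mulr0.
Qed.

Lemma Qs_gt0 s y : 0 < s -> 0 < Qs s y.
Proof.
move=> s0; rewrite /Qs ltr_pwDr //; rewrite /Qf; apply: sumr_ge0 => i _.
exact: sqr_ge0.
Qed.

Definition bfun (A p s : R) (y : 'rV[R]_n) := A * (Qs s y) `^ p.

Lemma partial_bfun A p s i y : 0 < s ->
  partial (bfun A p s) i y = 2 * y 0 i * (A * (p * (Qs s y) `^ (p - 1))).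
Proof.
move=> s0; rewrite /partial.
have -> : bfun A p s = (fun x : R => A * x `^ p) \o Qs s by [].
rewrite derive_comp1; [|exact: differentiable_Qs|exact: differentiable_Apow A p _ (Qs_gt0 s y s0)].
by rewrite derive_Qs derive1_Apow // Qs_gt0.
Qed.

Definition G1 (A p s : R) (i : 'I_n) :=
  ((fun y : 'rV[R]_n => 2 * crd i y) : 'rV[R]_n -> R) *
  ((fun x : R => (A * p) * x `^ (p - 1)) \o Qs s).

Lemma partial_bfun_fun A p s i : 0 < s -> partial (bfun A p s) i = G1 A p s i.
Proof.
move=> s0; apply/funext => y; rewrite partial_bfun //.
by rewrite /G1 [A * (p * _)]mulrA.
Qed.

Lemma differentiable_G1 A p s i y : 0 < s -> differentiable (G1 A p s i) y.
Proof.
move=> s0; apply: differentiableM.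
  have -> : (fun y : 'rV[R]_n => 2 * crd i y) = 2 \*: crd i by [].
  exact/differentiableZ/differentiable_crd.
apply: differentiable_comp; first exact: differentiable_Qs.
exact: differentiable_Apow (Qs_gt0 s y s0).
Qed.

Lemma partial2_bfun A p s i j x : 0 < s ->
  partial (partial (bfun A p s) i) j x =
  2 * x 0 i * (2 * x 0 j * (A * p * ((p - 1) * (Qs s x) `^ (p - 1 - 1))))
  + (A * p * (Qs s x) `^ (p - 1)) * (2 * (i == j)%:R).
Proof.
move=> s0; rewrite partial_bfun_fun // /partial /G1.
rewrite deriveM; last first.
- by apply/diff_derivable/differentiable_comp;
    [exact: differentiable_Qs|exact: differentiable_Apow (Qs_gt0 s x s0)].
- apply/diff_derivable.
  have -> : (fun y : 'rV[R]_n => 2 * crd i y) = 2 \*: crd i by [].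
  exact/differentiableZ/differentiable_crd.
rewrite derive_comp1; [|exact: differentiable_Qs|exact: differentiable_Apow (Qs_gt0 s x s0)].
rewrite derive_Qs derive1_Apow ?Qs_gt0 //.
have -> : (fun y : 'rV[R]_n => 2 * crd i y) = 2 \*: crd i by [].
rewrite deriveZ; last exact/diff_derivable/differentiable_crd.
have [_ ->] := is_derive_crd i x (@ebasis R n j).
rewrite /ebasis !mxE eqxx /= /crd eq_sym.
by [].
Qed.

Lemma sum_bound (f : 'I_n -> R) M : (forall i, `|f i| <= M) ->
  `|\sum_(i < n) f i| <= n%:R * M.
Proof.
move=> H; apply: le_trans (ler_norm_sum _ _ _) _.
apply: le_trans (ler_sum _ (fun i _ => H i)) _.
by rewrite sumr_const card_ord mulr_natl.
Qed.

Lemma sum2_bound (f : 'I_n -> 'I_n -> R) M : (forall i j, `|f i j| <= M) ->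
  `|\sum_(i < n) \sum_(j < n) f i j| <= n%:R * (n%:R * M).
Proof. by move=> H; apply: sum_bound => i; apply: sum_bound. Qed.

Lemma sum_delta (H : 'I_n -> 'I_n -> R) i :
  \sum_(j < n) (i == j)%:R * H i j = H i i.
Proof.
rewrite (bigD1 i) //= eqxx mul1r big1 ?addr0 // => j ji.
by rewrite eq_sym (negbTE ji) mul0r.
Qed.

Lemma powmono k l (x a : R) : (k <= l)%N -> 1 <= x -> 0 <= a -> x ^+ k * a <= x ^+ l * a.
Proof. by move=> kl x1 a0; rewrite ler_wpM2r // ler_weXn2l. Qed.

Lemma key (S : 'I_n -> 'I_n -> R) (Ga : 'I_n -> 'I_n -> 'I_n -> R)
  (bd : 'I_n -> R) (bdd : 'I_n -> 'I_n -> R) (u G eta : R) :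
  (1 <= n)%N -> u < 0 -> 0 <= eta -> n%:R ^+ 3 * eta <= 14^-1 ->
  0 <= G -> n%:R ^+ 5 * G <= 160^-1 ->
  (forall i j, `|S i j - (i == j)%:R| <= eta) ->
  (forall k l, `|bd k * bd l| <= G) ->
  (forall k i j, `|Ga k i j * bd k| <= 2 * eta * `|u|) ->
  (forall i j, `|bdd i j| <= (2 * n%:R + 1) * `|u|) ->
  \sum_(i < n) bdd i i <= u ->
  let gs := \sum_(k < n) \sum_(l < n) S k l * bd k * bd l in
  gs < 1 /\
  \sum_(i < n) \sum_(j < n)
     (S i j + (\sum_(k < n) \sum_(l < n) S i k * S j l * bd k * bd l) / (1 - gs))
     * (bdd i j - \sum_(k < n) Ga k i j * bd k) <= 0.
Proof.
move=> n1 u0 eta0 etab G0 Gb HS Hb HG Hbdd Hlap gs.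
set nn : R := n%:R in etab Gb Hbdd *.
have nn1 : 1 <= nn by rewrite /nn ler1n.
have nn0 : 0 <= nn by lra.
have nn2 : 1 <= nn ^+ 2 by rewrite expr_ge1.
have nn3 : 1 <= nn ^+ 3 by rewrite expr_ge1.
have eta1 : eta <= 1.
  have : eta <= nn ^+ 3 * eta by rewrite ler_peMl.
  lra.
have Sb : forall i j, `|S i j| <= 2.
  move=> i j; have := HS i j; have : `|(i == j)%:R : R| <= 1.
    by case: (i == j); rewrite ?normr1 ?normr0.
  move=> h1 h2; have := ler_normD (S i j - (i == j)%:R) (i == j)%:R.
  rewrite subrK; lra.
have au : `|u| = - u by rewrite ltr0_norm.
have gsb : `|gs| <= nn * (nn * (2 * G)).
  apply: sum2_bound => k l; rewrite -mulrA normrM.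
  apply: ler_pM => //; exact: Hb.
have gsh : `|gs| <= 2^-1.
  apply: le_trans gsb _.
  have -> : nn * (nn * (2 * G)) = 2 * (nn ^+ 2 * G) by ring.
  have := @powmono 2 5 nn G isT nn1 G0; lra.
split.
  have := ler_norm gs; lra.
set U := `|u| in HG Hbdd au *.
have U0 : 0 <= U by rewrite /U.
have nU : 0 <= nn * U by rewrite mulr_ge0.
set H := fun i j => bdd i j - \sum_(k < n) Ga k i j * bd k.
have Hb1 : forall i j, `|H i j| <= 5 * nn * U.
  move=> i j; rewrite /H; apply: le_trans (ler_normB _ _) _.
  have := Hbdd i j; have := sum_bound _ _ (fun k => HG k i j).
  have : eta * (nn * U) <= nn * U by rewrite ler_piMl.
  have : U <= nn * U by rewrite ler_peMl.
  have -> : nn * (2 * eta * U) = 2 * (eta * (nn * U)) by ring.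
  have -> : (2 * nn + 1) * U = 2 * (nn * U) + U by ring.
  have -> : 5 * nn * U = 5 * (nn * U) by ring.
  lra.
have lapH : \sum_(i < n) H i i <= u + nn * (nn * (2 * eta * U)).
  rewrite /H sumrB.
  have := sum2_bound (fun i k => Ga k i i * bd k) (2 * eta * U) (fun i k => HG k i i).
  rewrite -/nn => h; have := ler_norm (- \sum_(i < n) \sum_(k < n) Ga k i i * bd k).
  rewrite normrN; lra.
have d0 : 2^-1 <= 1 - gs by have := ler_norm gs; lra.
set N := fun i j => \sum_(k < n) \sum_(l < n) S i k * S j l * bd k * bd l.
have Nb : forall i j, `|N i j| <= nn * (nn * (4 * G)).
  move=> i j; apply: sum2_bound => k l.
  rewrite -mulrA normrM normrM.
  have -> : (4 : R) * G = 2 * 2 * G by ring.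
  apply: ler_pM => //; first by apply: ler_pM.
have invb : `|(1 - gs)^-1| <= 2.
  rewrite normfV ger0_norm; last lra.
  by rewrite invf_ple ?posrE; lra.
rewrite (eq_bigr (fun i => H i i + \sum_(j < n) (S i j - (i == j)%:R) * H i j
   + \sum_(j < n) N i j / (1 - gs) * H i j)); last first.
  move=> i _; rewrite -sum_delta -!big_split /=; apply: eq_bigr => j _.
  rewrite /H /N; ring.
rewrite !big_split /=.
have e1 : `|\sum_(i < n) \sum_(j < n) (S i j - (i == j)%:R) * H i j|
   <= nn * (nn * (eta * (5 * nn * U))).
  apply: sum2_bound => i j; rewrite normrM; apply: ler_pM => //.
have e2 : `|\sum_(i < n) \sum_(j < n) N i j / (1 - gs) * H i j|
   <= nn * (nn * ((nn * (nn * (4 * G))) * 2 * (5 * nn * U))).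
  apply: sum2_bound => i j; rewrite !normrM; apply: ler_pM => //.
    by apply: ler_pM.
have f1 : nn ^+ 2 * (eta * U) <= nn ^+ 3 * (eta * U).
  by apply: powmono => //; rewrite mulr_ge0.
have f2 : (nn ^+ 3 * eta) * U <= 14^-1 * U by rewrite ler_wpM2r.
have f3 : (nn ^+ 5 * G) * U <= 160^-1 * U by rewrite ler_wpM2r.
have := ler_norm (\sum_(i < n) \sum_(j < n) (S i j - (i == j)%:R) * H i j).
have := ler_norm (\sum_(i < n) \sum_(j < n) N i j / (1 - gs) * H i j).
rewrite sumrN; move: lapH; rewrite /H sumrB; lra.
Qed.

Lemma inv_close (A : 'M[R]_n) eps : 0 <= eps -> n%:R * eps <= 2^-1 ->
  (forall i j, `|A i j - (i == j)%:R| <= eps) ->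
  forall i j, `|invmx A i j - (i == j)%:R| <= 2 * eps.
Proof.
move=> e0 ne HA.
have [hu|hu] := boolP (A \in unitmx); last first.
  move=> i j; rewrite invmx_out ?inE //.
  by apply: le_trans (HA i j) _; rewrite ler_peMl // ler1n.
set S := invmx A.
have SA : S *m A = 1%:M by rewrite mulVmx.
have eq : forall i j, S i j - (i == j)%:R =
    - \sum_(k < n) S i k * (A k j - (k == j)%:R).
  move=> i j; have := congr1 (fun M : 'M[R]_n => M i j) SA.
  rewrite !mxE /= => h.
  have h2 : \sum_(k < n) S i k * (k == j)%:R = S i j.
    rewrite (bigD1 j) //= eqxx mulr1 big1 ?addr0 // => k kj.
    by rewrite (negbTE kj) mulr0.
  have -> : \sum_(k < n) S i k * (A k j - (k == j)%:R)
    = \sum_(k < n) S i k * A k j - \sum_(k < n) S i k * (k == j)%:R.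
    by rewrite -sumrB; apply: eq_bigr => k _; rewrite mulrBr.
  by rewrite h h2 opprB.
have bnd : forall i j, `|S i j - (i == j)%:R| <= eps * \sum_(k < n) `|S i k|.
  move=> i j; rewrite eq normrN; apply: le_trans (ler_norm_sum _ _ _) _.
  rewrite mulr_sumr; apply: ler_sum => k _; rewrite normrM mulrC.
  by apply: ler_wpM2r.
have Mb : forall i, \sum_(k < n) `|S i k| <= 2.
  move=> i; set M := \sum_(k < n) `|S i k|.
  have M0 : 0 <= M by apply: sumr_ge0.
  have : M <= \sum_(k < n) (`|(i == k)%:R : R| + eps * M).
    apply: ler_sum => k _.
    have := ler_normD (S i k - (i == k)%:R) (i == k)%:R; rewrite subrK => h.
    apply: le_trans h _; rewrite addrC lerD2l; exact: bnd.
  rewrite big_split /= sumr_const card_ord.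
  have -> : \sum_(k < n) `|(i == k)%:R : R| = 1.
    rewrite (bigD1 i) //= eqxx normr1 big1 ?addr0 // => k ki.
    by rewrite eq_sym (negbTE ki) normr0.
  rewrite -[eps * M *+ n]mulr_natl mulrA.
  have : n%:R * eps * M <= 2^-1 * M by rewrite ler_wpM2r.
  lra.
move=> i j; apply: le_trans (bnd i j) _; rewrite mulrC ler_wpM2r //.
Qed.


Lemma Qf_ge0 (x : 'rV[R]_n) : 0 <= Qf x.
Proof. by apply: sumr_ge0 => i _; exact: sqr_ge0. Qed.

Lemma coord_sq_le (x : 'rV[R]_n) k : x 0 k ^+ 2 <= Qf x.
Proof.
rewrite /Qf (bigD1 k) //= lerDl; apply: sumr_ge0 => i _; exact: sqr_ge0.
Qed.

Lemma coord_le (x : 'rV[R]_n) k : `|x 0 k| <= Num.sqrt (Qf x).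
Proof. by rewrite -sqrtr_sqr ler_sqrt ?Qf_ge0 // coord_sq_le. Qed.

Lemma coord_mul_le (x : 'rV[R]_n) k l : `|x 0 k| * `|x 0 l| <= Qf x.
Proof.
rewrite -[Qf x](sqr_sqrtr (Qf_ge0 x)) expr2.
by apply: ler_pM => //; exact: coord_le.
Qed.

End Aux.
Arguments Qs {R n}. Arguments Qf {R n}. Arguments bfun {R n}. Arguments crd {R n}.
Arguments G1 {R n}.

Section P.
Variables (R : realType) (n : nat).

Lemma pointwise (sigma : 'rV[R]_n -> 'M[R]_n) (x : 'rV[R]_n) (A p s e0 : R) :
  (3 <= n)%N -> p = 2^-1 * - (n%:R - 5 / 2) -> 0 < A -> 0 < s -> 0 < Qf x ->
  e0 = (42 * n%:R ^+ 4)^-1 ->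
  n%:R ^+ 5 * (4 * (A * (p * Qs s x `^ (p - 1))) ^+ 2 * Qf x) <= 160^-1 ->
  (forall i j, `|sigma x i j - (i == j)%:R| <= e0) ->
  (forall i j k, `|partial (fun y => sigma y i j) k x| <= e0 / Num.sqrt (Qf x)) ->
  twice_diff (bfun A p s) x /\ grad_sq sigma (bfun A p s) x < 1 /\
  static_op sigma (bfun A p s) x <= 0.
Proof.
move=> hn hp A0 s0 Qx0 he0 hG hsig hdsig.
set nn : R := n%:R in hp he0 hG.
have nn3 : 3 <= nn by rewrite /nn ler_nat.
have nn0 : 0 < nn by lra.
have n1 : (1 <= n)%N by apply: leq_trans hn.
set q := Qs s x.
have q0 : 0 < q by exact: Qs_gt0.
have Qq : Qf x <= q by rewrite /q /Qs lerDl ltW.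
set P1 := q `^ (p - 1).
have P10 : 0 < P1 by rewrite powR_gt0.
have p0 : p < 0 by rewrite hp; lra.
set u := A * (p * P1).
have u0 : u < 0 by rewrite /u pmulr_rlt0 // pmulr_llt0.
set r := Num.sqrt (Qf x).
have r0 : 0 < r by rewrite sqrtr_gt0.
have bdE : forall k, partial (bfun A p s) k x = 2 * x 0 k * u.
  by move=> k; rewrite partial_bfun.
have qpow : q `^ (p - 1 - 1) = P1 / q.
  rewrite powRB; last by rewrite (gt_eqF q0) implybT.
  by rewrite powRr1 // ltW.
have bddE : forall i j, partial (partial (bfun A p s) i) j x =
    u * (4 * (p - 1) / q * (x 0 i * x 0 j) + 2 * (i == j)%:R).
  move=> i j; rewrite partial2_bfun // -/q qpow /u /P1; ring.
have e0n : nn ^+ 4 * e0 = 42^-1.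
  by rewrite he0 invfM mulrCA mulfV ?mulr1 // expf_neq0 // gt_eqF.
have e00 : 0 < e0 by rewrite he0 invr_gt0 mulr_gt0 // exprn_gt0.
have ne0 : nn * e0 <= 2^-1.
  have := @powmono R 1 4 nn e0 isT (ltW (lt_le_trans _ nn3)) (ltW e00).
  rewrite expr1; lra.
set eta := 3 * nn * e0.
have eta0 : 0 <= eta by rewrite /eta !mulr_ge0 // ?ltW.
have etab : nn ^+ 3 * eta <= 14^-1.
  have -> : nn ^+ 3 * eta = 3 * (nn ^+ 4 * e0) by rewrite /eta; ring.
  rewrite e0n; lra.
have hS := @inv_close R n (sigma x) e0 (ltW e00) ne0 hsig.
have Sb : forall i j, `|sinv sigma x i j| <= 2.
  move=> i j; have := hS i j; have : `|(i == j)%:R : R| <= 1.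
    by case: (i == j); rewrite ?normr1 ?normr0.
  move=> h1 h2; have := ler_normD (sinv sigma x i j - (i == j)%:R) (i == j)%:R.
  rewrite subrK; have : e0 <= 2^-1 by have := ler_peMl (ltW e00) (ltW (lt_le_trans _ nn3)); lra.
  lra.
have hS' : forall i j, `|sinv sigma x i j - (i == j)%:R| <= eta.
  move=> i j; apply: le_trans (hS i j) _; rewrite /eta ler_wpM2r // ?ltW //; lra.
have Gab : forall k i j, `|christoffel sigma x k i j| <= eta / r.
  move=> k i j; rewrite /christoffel normrM ger0_norm ?invr_ge0 //.
  have := @sum_bound R n (fun l => sinv sigma x k l *
    (partial (fun y => sigma y j l) i x + partial (fun y => sigma y i l) j x
     - partial (fun y => sigma y i j) l x)) (2 * (3 * (e0 / r))).
  have HH : forall l, `|sinv sigma x k l *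
    (partial (fun y => sigma y j l) i x + partial (fun y => sigma y i l) j x
     - partial (fun y => sigma y i j) l x)| <= 2 * (3 * (e0 / r)).
    move=> l; rewrite normrM; apply: ler_pM => //.
    have := hdsig j l i; have := hdsig i l j; have := hdsig i j l.
    rewrite -/r => h1 h2 h3.
    apply: le_trans (ler_normB _ _) _; have := ler_normD (partial (fun y => sigma y j l) i x) (partial (fun y => sigma y i l) j x).
    lra.
  move=> /(_ HH) h; rewrite /eta.
  have -> : 3 * nn * e0 / r = 2^-1 * (nn * (2 * (3 * (e0 / r)))) by field; rewrite gt_eqF.
  by rewrite ler_wpM2l.
set G := 4 * u ^+ 2 * Qf x.
have G0 : 0 <= G by rewrite /G mulr_ge0 ?Qf_ge0 // mulr_ge0 ?sqr_ge0.
have Hb : forall k l, `|partial (bfun A p s) k x * partial (bfun A p s) l x| <= G.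
  move=> k l; rewrite !bdE.
  have -> : 2 * x 0 k * u * (2 * x 0 l * u) = (4 * u ^+ 2) * (x 0 k * x 0 l) by ring.
  have h4 : 0 <= 4 * u ^+ 2 by rewrite mulr_ge0 ?sqr_ge0.
  rewrite normrM (ger0_norm h4) /G. have := @coord_mul_le R n x k l. rewrite normrM. nra.
have HG : forall k i j, `|christoffel sigma x k i j * partial (bfun A p s) k x|
    <= 2 * eta * `|u|.
  move=> k i j; rewrite bdE normrM.
  have h1 : `|2 * x 0 k * u| <= 2 * r * `|u|.
    rewrite !normrM ger0_norm // ler_wpM2r // ler_wpM2l //; exact: coord_le.
  apply: le_trans (ler_pM _ _ (Gab k i j) h1) _ => //.
  have -> : eta / r * (2 * r * `|u|) = 2 * eta * `|u| * (r / r) by ring.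
  by rewrite divff ?gt_eqF // mulr1.
have nq : 0 <= 4 * (1 - p) / q by rewrite divr_ge0 ?ltW //; lra.
have kq : 4 * (1 - p) / q * Qf x <= 2 * nn - 1.
  have -> : 2 * nn - 1 = 4 * (1 - p) / q * q.
    by rewrite mulfVK ?gt_eqF // hp; field.
  by rewrite ler_wpM2l.
have Hbdd : forall i j, `|partial (partial (bfun A p s) i) j x| <= (2 * nn + 1) * `|u|.
  move=> i j; rewrite bddE normrM mulrC ler_wpM2r //.
  apply: le_trans (ler_normD _ _) _.
  have : `|2 * (i == j)%:R : R| <= 2.
    by case: (i == j); rewrite ?mulr1 ?mulr0 ?normr0 ?ger0_norm.
  have : `|4 * (p - 1) / q * (x 0 i * x 0 j)| <= 2 * nn - 1.
    apply: le_trans kq; rewrite normrM.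
    have -> : `|4 * (p - 1) / q| = 4 * (1 - p) / q.
      rewrite -normrN; have -> : - (4 * (p - 1) / q) = 4 * (1 - p) / q by ring.
      by rewrite ger0_norm.
    by rewrite ler_wpM2l // normrM coord_mul_le.
  lra.
have Hlap : \sum_(i < n) partial (partial (bfun A p s) i) i x <= u.
  under eq_bigr do rewrite bddE eqxx.
  rewrite -mulr_sumr big_split /= sumr_const card_ord -mulr_sumr.
  have -> : \sum_(i < n) x 0 i * x 0 i = Qf x.
    by apply: eq_bigr => i _; rewrite expr2.
  rewrite -[X in _ <= X]mulr1 (ler_nM2l u0).
  have -> : 4 * (p - 1) / q * Qf x = - (4 * (1 - p) / q * Qf x) by ring.
  rewrite -mulr_natr -/nn; lra.
have K := @key R n (fun i j => sinv sigma x i j) (christoffel sigma x)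
  (fun k => partial (bfun A p s) k x)
  (fun i j => partial (partial (bfun A p s) i) j x) u G eta n1 u0 eta0 etab G0 hG
  hS' Hb HG Hbdd Hlap.
case: K => K1 K2.
split; last by split; [exact: K1|exact: K2].
split.
  have -> : bfun A p s = (fun q : R => A * q `^ p) \o Qs s by [].
  apply: differentiable_comp; first exact: differentiable_Qs.
  by apply: differentiable_Apow; exact: Qs_gt0.
by move=> i; rewrite partial_bfun_fun //; exact: differentiable_G1.
Qed.

End P.

Lemma Gbound (R : realType) (nn c r0 q Q p a : R) :
  3 <= nn -> 0 < c -> c * nn ^+ 4 = 16^-1 -> 0 < r0 -> r0 ^+ 2 <= q -> 0 <= Q -> Q <= q ->
  p = 2^-1 * - (nn - 5 / 2) -> a = nn - 3 / 2 ->
  nn ^+ 5 * (4 * ((c * r0 `^ a) * (p * q `^ (p - 1))) ^+ 2 * Q) <= 160^-1.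
Proof.
move=> nn3 c0 cn r00 rq Q0 Qq hp ha.
have q0 : 0 < q by apply: lt_le_trans rq; rewrite exprn_gt0.
have qn0 : (q != 0) by rewrite gt_eqF.
set P1 := q `^ (p - 1).
have a0 : 0 <= a by rewrite ha; lra.
have TW : (r0 `^ a) ^+ 2 * P1 ^+ 2 * q = (r0 ^+ 2) `^ a / q `^ a.
  rewrite [(r0 ^+ 2)]expr2 powRM ?ltW // -expr2 -mulrA; congr (_ * _).
  rewrite -powRN.
  have -> : q `^ (- a) = q `^ ((p - 1) + (p - 1) + 1) by congr (_ `^ _); rewrite hp ha; lra.
  rewrite powRD; last by rewrite qn0 implybT.
  rewrite powRD; last by rewrite qn0 implybT.
  by rewrite powRr1 ?(ltW q0) // expr2.
have W1 : (r0 ^+ 2) `^ a / q `^ a <= 1.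
  rewrite ler_pdivrMr ?powR_gt0 // mul1r.
  by apply: ge0_ler_powR => //; rewrite nnegrE ?sqr_ge0 ?ltW.
have W0 : 0 <= (r0 ^+ 2) `^ a / q `^ a by rewrite divr_ge0 ?powR_ge0.
set W := (r0 ^+ 2) `^ a / q `^ a in TW W1 W0.
have T0 : 0 <= (r0 `^ a) ^+ 2 * P1 ^+ 2 by rewrite mulr_ge0 ?sqr_ge0.
have e1 : 4 * ((c * r0 `^ a) * (p * P1)) ^+ 2 * Q <= 4 * p ^+ 2 * c ^+ 2 * W.
  rewrite -TW.
  have -> : 4 * ((c * r0 `^ a) * (p * P1)) ^+ 2 * Q =
    (4 * p ^+ 2 * c ^+ 2 * ((r0 `^ a) ^+ 2 * P1 ^+ 2)) * Q by ring.
  rewrite -mulrA; apply: ler_wpM2l; first by rewrite mulr_ge0 ?sqr_ge0 // mulr_ge0 ?sqr_ge0.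
  exact: ler_wpM2l.
have pn : 4 * p ^+ 2 <= nn ^+ 2.
  have -> : 4 * p ^+ 2 = (nn - 5 / 2) ^+ 2 by rewrite hp; field.
  rewrite ler_sqr ?nnegrE; lra.
have Z0 : 0 <= nn ^+ 7 * c ^+ 2 by rewrite mulr_ge0 ?sqr_ge0 ?exprn_ge0 //; lra.
have Zn : nn * (nn ^+ 7 * c ^+ 2) = 256^-1.
  have -> : nn * (nn ^+ 7 * c ^+ 2) = (c * nn ^+ 4) ^+ 2 by ring.
  by rewrite cn; field.
have f1 : nn ^+ 5 * (4 * p ^+ 2 * c ^+ 2 * W) <= nn ^+ 7 * c ^+ 2.
  have -> : nn ^+ 7 * c ^+ 2 = nn ^+ 5 * (nn ^+ 2 * c ^+ 2 * 1) by ring.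
  apply: ler_wpM2l; first by rewrite exprn_ge0 //; lra.
  apply: ler_pM => //; first by rewrite mulr_ge0 ?sqr_ge0 // mulr_ge0 ?sqr_ge0.
  by apply: ler_wpM2r => //; exact: sqr_ge0.
have f0 : 0 <= nn ^+ 5 by rewrite exprn_ge0 //; lra.
have := ler_wpM2l f0 e1.
set Z := nn ^+ 7 * c ^+ 2 in Z0 Zn f1.
move=> h; apply: le_trans h _; apply: le_trans f1 _.
nra.
Qed.

Lemma powR_decr (R : realType) (x y p : R) : 0 < x -> x <= y -> p <= 0 -> y `^ p <= x `^ p.
Proof.
move=> x0 xy p0; rewrite -(opprK p) !(powRN _ (- p)).
rewrite lef_pV2 ?posrE ?powR_gt0 //; last exact: lt_le_trans xy.
apply: ge0_ler_powR => //; first by rewrite oppr_ge0.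
  by rewrite nnegrE ltW.
by rewrite nnegrE (le_trans (ltW x0)).
Qed.

Theorem lemma3p1 (R : realType) (n : nat) (hn : (3 <= n)%N) :
  exists C : R, 0 < C /\
  forall (R0 : R) (sigma : 'rV[R]_n -> 'M[R]_n),
    riem_metric_ext R0 sigma -> asymp_flat sigma ->
    exists r1 : R, 0 < r1 /\
    forall r0 : R, r1 <= r0 ->
      exists b : 'rV[R]_n -> R,
        rot_sym_ext r0 b /\
        (forall x : 'rV[R]_n, r0 <= enorm x ->
           C^-1 * (r0 `^ (n%:R - 3 / 2) * enorm x `^ (- (n%:R - 5 / 2))) <= b x /\
           b x <= C * (r0 `^ (n%:R - 3 / 2) * enorm x `^ (- (n%:R - 5 / 2)))) /\
        (forall x : 'rV[R]_n, r0 < enorm x ->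
           twice_diff b x /\ grad_sq sigma b x < 1 /\ static_op sigma b x <= 0).
Proof.
set nn : R := n%:R.
have nn3 : 3 <= nn by rewrite /nn ler_nat.
have nn0 : 0 < nn by lra.
set c : R := (16 * nn ^+ 4)^-1.
have c0 : 0 < c by rewrite /c invr_gt0 mulr_gt0 // exprn_gt0.
have cn : c * nn ^+ 4 = 16^-1.
  by rewrite /c invfM -mulrA mulVf ?mulr1 // expf_neq0 // gt_eqF.
have c1 : c <= 1.
  have : 1 <= nn ^+ 4 by rewrite expr_ge1 //; lra.
  move=> h; have : c * 1 <= c * nn ^+ 4 by rewrite ler_wpM2l // ltW.
  lra.
have tn0 : 0 < (2 : R) ^+ n by rewrite exprn_gt0 // ltr0n.
have tn1 : 1 <= (2 : R) ^+ n by apply: exprn_ege1; lra.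
exists (2 ^+ n / c); split; first by rewrite divr_gt0.
move=> R0 sigma _ [omega [_ [ocvg [Cf [R1 [Cf0 Haf]]]]]].
set e0 : R := (42 * nn ^+ 4)^-1.
have e00 : 0 < e0 by rewrite /e0 invr_gt0 mulr_gt0 // exprn_gt0.
have := ocvg; move/cvgr0Pnorm_lt => /(_ (e0 / Cf) (divr_gt0 e00 Cf0)).
move=> [M [_ HM]].
exists (Num.max 1 (Num.max R1 (M + 1))); split.
  by rewrite lt_max ltr01.
move=> r0; rewrite !ge_max => /and3P[r01 R1r0 Mr0].
have r00 : 0 < r0 by lra.
set p : R := 2^-1 * - (nn - 5 / 2).
set a : R := nn - 3 / 2.
set s : R := r0 ^+ 2.
have s0 : 0 < s by rewrite /s exprn_gt0.
set A : R := c * r0 `^ a.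
have A0 : 0 < A by rewrite /A mulr_gt0 // powR_gt0.
have enQ : forall x : 'rV[R]_n, enorm x ^+ 2 = Qf x.
  by move=> x; exact: (sqr_sqrtr (@Qf_ge0 R n x)).
have en0 : forall x : 'rV[R]_n, 0 <= enorm x by move=> x; exact: sqrtr_ge0.
exists (bfun A p s); split.
  move=> x y _ hxy; rewrite /bfun /Qs -!enQ hxy //.
have p0 : p <= 0 by rewrite /p; lra.
split.
  move=> x hx.
  have sQ : s <= Qf x by rewrite -enQ /s !expr2 ler_pM // ltW.
  have Q0 : 0 < Qf x by lra.
  have hpow : enorm x `^ (- (nn - 5 / 2)) = Qf x `^ p.
    by rewrite /p powRrM (powR12_sqrt (@Qf_ge0 R n x)).
  rewrite hpow /bfun /Qs.
  have up : (Qf x + s) `^ p <= Qf x `^ p.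
    by apply: powR_decr => //; rewrite lerDl ltW.
  have lo : 2 ^- n * Qf x `^ p <= (Qf x + s) `^ p.
    have h1 : (2 * Qf x) `^ p <= (Qf x + s) `^ p.
      by apply: powR_decr => //; [lra|lra].
    rewrite powRM in h1; [|lra|exact: ltW].
    apply: le_trans h1; apply: ler_wpM2r; first exact: powR_ge0.
    rewrite -powR_invn; last lra.
    by apply: ler_powR; [lra|rewrite /p; lra].
  have E0 : 0 <= r0 `^ a by exact: powR_ge0.
  have cE : 0 <= c * r0 `^ a by rewrite mulr_ge0 // ltW.
  split.
    rewrite invf_div.
    have -> : c / 2 ^+ n * (r0 `^ a * Qf x `^ p) = c * r0 `^ a * (2 ^- n * Qf x `^ p).
      by rewrite /= ; ring.
    by rewrite /A; apply: ler_wpM2l.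
  have cc : c <= 2 ^+ n / c.
    rewrite ler_pdivlMr //; apply: le_trans tn1; rewrite -[1](mulr1 1).
    by apply: ler_pM => //; exact: ltW.
  apply: (@le_trans _ _ (c * (r0 `^ a * Qf x `^ p))).
    by rewrite /A -mulrA; apply: ler_wpM2l; [exact: ltW|exact: ler_wpM2l].
  by apply: ler_wpM2r => //; rewrite mulr_ge0 ?powR_ge0.
move=> x hx.
have sQ : s <= Qf x by rewrite -enQ /s !expr2 ler_pM // ltW.
have Q0 : 0 < Qf x by lra.
have hR1 : R1 <= enorm x by lra.
have hM : M < enorm x by lra.
have om := HM _ hM.
have Cfom : Cf * `|omega (enorm x)| <= e0.
  have Cfn : Cf != 0 by rewrite gt_eqF.
  by have := ler_wpM2l (ltW Cf0) (ltW om); rewrite mulrCA (divff Cfn) mulr1.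
apply: (@pointwise R n sigma x A p s e0) => //.
- rewrite -/nn; apply: (@Gbound R nn c r0 (Qs s x) (Qf x) p a) => //.
  + by rewrite /Qs lerDr ltW.
  + exact: ltW.
  + by rewrite /Qs lerDl ltW.
- move=> i j; have [h _] := Haf x hR1 i j.
  apply: le_trans h _; apply: le_trans Cfom.
  by apply: ler_wpM2l; [exact: ltW|exact: ler_norm].
- move=> i j k; have [_ h] := Haf x hR1 i j; have {h} h := h k.
  apply: le_trans h _.
  have -> : Cf * (omega (enorm x) / enorm x) = (Cf * omega (enorm x)) / enorm x by ring.
  apply: ler_wpM2r; first by rewrite invr_ge0.
  apply: le_trans Cfom.
  by apply: ler_wpM2l; [exact: ltW|exact: ler_norm].
Qed.
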